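(* Let $N\ge1$ be an integer and $\beta,\gamma,\xi,\eta,D,R>0$. Define, for $z>0$, $\bar C(z)=\dfrac{\gamma\xi R^2e^{-\frac{R^2}{4zD}-\eta z}}{8z^2D^2}$ and $g(t)=N\int_0^t\bar C(t-\tau)\,d\tau$. Then the equilibrium $(V,X)=(0,0)$ of the linear system $$\dot V=-\beta V-g(t)X,\qquad \dot X=V$$ is globally uniformly asymptotically stable with exponential rate of convergence.
   Context: This planar system is the linearization, written in centre-of-mass variables for each particle and each coordinate, of a hybrid model of $N$ particles in $\mathbb{R}^2$ with Cucker–Smale alignment (strength $\beta$) and chemotaxis towards a signal diffusing with coefficient $D$, degrading at rate $\eta$, produced at rate $\xi$ on discs of radius $R$, with chemotactic sensitivity $\gamma$. *)

(* Defs.v *)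
From Stdlib Require Import Reals.
From Coquelicot Require Import Coquelicot.
Open Scope R_scope.

(* Cbar(z) = gamma xi R^2 exp(-R^2/(4 z D) - eta z) / (8 z^2 D^2) for z > 0;
   extended by 0 for z <= 0 (its limit as z -> 0+), only relevant at the
   endpoint tau = t of the integral defining g. *)
Definition Cbar (gamma xi eta D Rr : R) (z : R) : R :=
  if Rlt_dec 0 z then
    gamma * xi * Rr ^ 2 * exp (- (Rr ^ 2) / (4 * z * D) - eta * z)
      / (8 * z ^ 2 * D ^ 2)
  else 0.

Definition gcoef (N : nat) (gamma xi eta D Rr : R) (t : R) : R :=
  INR N * RInt (fun tau => Cbar gamma xi eta D Rr (t - tau)) 0 t.

Definition is_solution (beta : R) (g : R -> R) (t0 : R) (V X : R -> R) : Prop :=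
  filterlim V (at_right t0) (locally (V t0)) /\
  filterlim X (at_right t0) (locally (X t0)) /\
  forall t, t0 < t ->
    is_derive V t (- beta * V t - g t * X t) /\ is_derive X t (V t).

Definition state_norm (V X : R -> R) (t : R) : R := sqrt (V t ^ 2 + X t ^ 2).

Definition GUES_exp (beta : R) (g : R -> R) : Prop :=
  exists K lam : R, 0 < K /\ 0 < lam /\
    forall (t0 : R) (V X : R -> R), 0 <= t0 -> is_solution beta g t0 V X ->
      forall t, t0 <= t ->
        state_norm V X t <= K * exp (- lam * (t - t0)) * state_norm V X t0.

(* Main.v *)
Require Import Defs.
From Stdlib Require Import Reals Lra Psatz.
From Coquelicot Require Import Coquelicot.
Open Scope R_scope.

Lemma exp_sq_lb u : 0 < u -> (u/2)^2 < exp u.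
Proof.
intro H. replace u with (u/2 + u/2) at 2 by field. rewrite exp_plus.
assert (1 + u/2 < exp (u/2)) by (apply exp_ineq1; lra). nra.
Qed.

Lemma exp_cube_lb u : 0 < u -> (u/3)^3 < exp u.
Proof.
intro H. replace u with (u/3 + u/3 + u/3) at 2 by field. rewrite !exp_plus.
assert (1 + u/3 < exp (u/3)) by (apply exp_ineq1; lra).
assert (0 < u/3) by lra.
assert ((u/3)^2 < exp (u/3) * exp (u/3)) by nra.
nra.
Qed.

Lemma exp_le' x y : x <= y -> exp x <= exp y.
Proof. intro h. destruct h as [h|h]. left; now apply exp_increasing. subst; lra. Qed.

Section C.
Variables gamma xi eta D Rr : R.
Hypotheses (hg : 0 < gamma) (hx : 0 < xi) (he : 0 < eta) (hD : 0 < D) (hR : 0 < Rr).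
Let k := gamma*xi*Rr^2/(8*D^2).
Let a := Rr^2/(4*D).

Lemma k_pos : 0 < k.
Proof. unfold k. apply Rdiv_lt_0_compat; [|nra]. apply Rmult_lt_0_compat; [nra|]. nra. Qed.
Lemma a_pos : 0 < a.
Proof. unfold a. apply Rdiv_lt_0_compat; nra. Qed.

Lemma Cbar_form z : 0 < z ->
  Cbar gamma xi eta D Rr z = k * / exp (a/z) * exp (- eta * z) / z^2.
Proof.
intro hz. unfold Cbar. destruct (Rlt_dec 0 z); [|lra].
replace (- (Rr ^ 2) / (4 * z * D) - eta * z) with (- (a / z) + - eta * z)
 by (unfold a; field; lra).
rewrite exp_plus, exp_Ropp. unfold k. field. split; [apply Rgt_not_eq, exp_pos|lra].
Qed.

Lemma Cbar_nonpos z : z <= 0 -> Cbar gamma xi eta D Rr z = 0.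
Proof. intro hz. unfold Cbar. destruct (Rlt_dec 0 z); lra. Qed.

Lemma Cbar_pos z : 0 < z -> 0 < Cbar gamma xi eta D Rr z.
Proof.
intro hz. rewrite Cbar_form by lra. pose proof k_pos.
apply Rdiv_lt_0_compat; [|nra]. apply Rmult_lt_0_compat; [|apply exp_pos].
apply Rmult_lt_0_compat; [lra|]. apply Rinv_0_lt_compat, exp_pos.
Qed.

Lemma Cbar_ge0 z : 0 <= Cbar gamma xi eta D Rr z.
Proof. destruct (Rlt_dec 0 z). left; now apply Cbar_pos. rewrite Cbar_nonpos; lra. Qed.

Definition Acst := k * (4 / a^2).
Lemma Acst_pos : 0 < Acst.
Proof. unfold Acst. pose proof k_pos; pose proof a_pos. apply Rmult_lt_0_compat; auto.
apply Rdiv_lt_0_compat; nra. Qed.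

Lemma Cbar_le_exp z : Cbar gamma xi eta D Rr z <= Acst * exp (- eta * z).
Proof.
pose proof Acst_pos. pose proof (exp_pos (-eta*z)).
destruct (Rlt_dec 0 z) as [hz|hz]; [|rewrite Cbar_nonpos; nra].
rewrite Cbar_form by lra. pose proof k_pos; pose proof a_pos; pose proof (exp_pos (a/z)).
assert (h1 : ((a/z)/2)^2 < exp (a/z)) by (apply exp_sq_lb; apply Rdiv_lt_0_compat; lra).
assert (h2 : / exp (a/z) <= / (((a/z)/2)^2)).
{ apply Rinv_le_contravar; [|lra]. apply pow_lt. apply Rdiv_lt_0_compat; [|lra]. apply Rdiv_lt_0_compat; lra. }
replace (/ (((a/z)/2)^2)) with (4 * z^2 / a^2) in h2 by (field; lra).
unfold Acst.
replace (k * / exp (a / z) * exp (- eta * z) / z ^ 2) with (k * exp (-eta*z) / z^2 * / exp (a/z)) by (field; lra).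
replace (k * (4 / a ^ 2) * exp (- eta * z)) with (k * exp (-eta*z) / z^2 * (4 * z^2/a^2)) by (field; lra).
apply Rmult_le_compat_l; [|exact h2].
apply Rlt_le, Rdiv_lt_0_compat; [|nra]. nra.
Qed.

Definition Bcst := k * (27 / a^3).
Lemma Bcst_pos : 0 < Bcst.
Proof. unfold Bcst. pose proof k_pos; pose proof a_pos. apply Rmult_lt_0_compat; auto.
apply Rdiv_lt_0_compat; [lra|]. now apply pow_lt. Qed.
Lemma Cbar_le_lin z : 0 < z -> Cbar gamma xi eta D Rr z <= Bcst * z.
Proof.
intro hz. rewrite Cbar_form by lra. pose proof k_pos; pose proof a_pos; pose proof (exp_pos (a/z)).
assert (h1 : ((a/z)/3)^3 < exp (a/z)) by (apply exp_cube_lb; apply Rdiv_lt_0_compat; lra).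
assert (h2 : / exp (a/z) <= / (((a/z)/3)^3)).
{ apply Rinv_le_contravar; [|lra]. apply pow_lt. apply Rdiv_lt_0_compat; [|lra]. apply Rdiv_lt_0_compat; lra. }
replace (/ (((a/z)/3)^3)) with (27 * z^3 / a^3) in h2 by (field; lra).
assert (h3 : exp (-eta*z) <= 1). { rewrite <- exp_0. apply exp_le'. nra. }
pose proof (exp_pos (-eta*z)). pose proof (Rinv_0_lt_compat _ (exp_pos (a/z))).
unfold Bcst.
replace (k * / exp (a / z) * exp (- eta * z) / z ^ 2) with (k / z^2 * (/ exp (a/z) * exp (-eta*z))) by (field; lra).
replace (k * (27 / a ^ 3) * z) with (k / z^2 * (27 * z^3/a^3 * 1)) by (field; lra).
apply Rmult_le_compat_l. apply Rlt_le, Rdiv_lt_0_compat; nra.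
apply Rmult_le_compat; lra.
Qed.
End C.


Lemma ball_R (x e y : R) : ball x e y <-> Rabs (y - x) < e.
Proof. reflexivity. Qed.

Section C.
Variables gamma xi eta D Rr : R.
Hypotheses (hg : 0 < gamma) (hx : 0 < xi) (he : 0 < eta) (hD : 0 < D) (hR : 0 < Rr).
Notation Cb := (Cbar gamma xi eta D Rr).

Lemma Cbar_cont z : continuous Cb z.
Proof.
destruct (Rtotal_order z 0) as [hz|[hz|hz]].
- apply (ex_derive_continuous (K:=R_AbsRing) (V:=R_NormedModule)). apply (ex_derive_ext_loc (fun _ => 0)).
  + exists (mkposreal (-z) ltac:(lra)). intros y hy. apply ball_R in hy. simpl in hy.
    rewrite Cbar_nonpos; [reflexivity|]. apply Rabs_def2 in hy. destruct hy. unfold minus, plus, opp in *; simpl in *; lra.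
  + auto_derive. auto.
- subst. apply continuity_pt_filterlim.
  intros eps heps. pose proof (Bcst_pos gamma xi D Rr hg hx hD hR) as hB.
  exists (eps / (Bcst gamma xi D Rr + 1)). split.
  { apply Rdiv_lt_0_compat; lra. }
  intros y [_ hy]. unfold R_dist in *. rewrite (Cbar_nonpos _ _ _ _ _ 0) by lra.
  simpl in *. unfold R_dist in *. rewrite !Rminus_0_r in *.
  destruct (Rlt_dec 0 y) as [hy0|hy0].
  + pose proof (Cbar_le_lin gamma xi eta D Rr hg hx he hD hR y hy0).
    pose proof (Cbar_ge0 gamma xi eta D Rr hg hx hD hR y).
    rewrite Rabs_right by lra. rewrite Rabs_right in hy by lra.
    apply (Rmult_lt_compat_l (Bcst gamma xi D Rr + 1)) in hy; [|lra].
    replace ((Bcst gamma xi D Rr + 1) * (eps / (Bcst gamma xi D Rr + 1))) with eps in hy by (field; lra).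
    nra.
  + rewrite Cbar_nonpos by lra. rewrite Rabs_R0. exact heps.
- apply (ex_derive_continuous (K:=R_AbsRing) (V:=R_NormedModule)).
  apply (ex_derive_ext_loc (fun z => gamma * xi * Rr ^ 2 * exp (- (Rr ^ 2) / (4 * z * D) - eta * z)
      / (8 * z ^ 2 * D ^ 2))).
  + exists (mkposreal z ltac:(lra)). intros y hy. apply ball_R in hy. simpl in hy.
    apply Rabs_def2 in hy; destruct hy. unfold minus, plus, opp in *; simpl in *. unfold Cbar. destruct (Rlt_dec 0 y); [reflexivity|lra].
  + auto_derive. assert (0 < z*D) by nra. assert (0 < z*z*(D*D)) by (apply Rmult_lt_0_compat; nra). repeat split; nra.
Qed.
End C.


Section G.
Variables (N : nat) (gamma xi eta D Rr : R).
Hypotheses (hg : 0 < gamma) (hx : 0 < xi) (he : 0 < eta) (hD : 0 < D) (hR : 0 < Rr).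
Notation Cb := (Cbar gamma xi eta D Rr).
Notation g := (gcoef N gamma xi eta D Rr).

Lemma Cb_exRInt a b : ex_RInt Cb a b.
Proof. apply (ex_RInt_continuous (V:=R_CompleteNormedModule)). intros; now apply Cbar_cont. Qed.

Lemma g_eq t : g t = INR N * RInt Cb 0 t.
Proof.
unfold gcoef. f_equal.
pose proof (RInt_comp_lin (V:=R_CompleteNormedModule) Cb (-1) t 0 t (Cb_exRInt _ _)) as H1.
pose proof (ex_RInt_comp_lin (V:=R_NormedModule) Cb (-1) t 0 t (Cb_exRInt _ _)) as H2.
rewrite (RInt_ext (fun tau => Cb (t - tau)) (fun y => scal (-1) (scal (-1) (Cb (-1 * y + t))))).
2:{ intros x _. unfold scal; simpl; unfold mult; simpl. replace (-1*x+t) with (t-x) by ring. ring. }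
rewrite (RInt_scal (V:=R_CompleteNormedModule)) by exact H2. etransitivity; [apply f_equal; exact H1|].
replace (-1 * 0 + t) with t by ring. replace (-1 * t + t) with 0 by ring.
rewrite <- (opp_RInt_swap (V:=R_CompleteNormedModule)) by apply Cb_exRInt.
unfold scal, opp; simpl; unfold mult; simpl. ring.
Qed.

Lemma g_derive t : is_derive g t (INR N * Cb t).
Proof.
apply (is_derive_ext (fun t => INR N * RInt Cb 0 t)). { intro; now rewrite g_eq. }
apply is_derive_scal. apply (is_derive_RInt Cb (fun b => RInt Cb 0 b) 0 t).
- exists (mkposreal 1 Rlt_0_1). intros; apply (RInt_correct (V:=R_CompleteNormedModule)), Cb_exRInt.
- now apply Cbar_cont.
Qed.

Lemma g0 : g 0 = 0.
Proof. rewrite g_eq, RInt_point. unfold zero; simpl. ring. Qed.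
End G.


Lemma deriv_contpt f df x : is_derive f x df -> continuity_pt f x.
Proof.
intro H. apply continuity_pt_filterlim.
apply (ex_derive_continuous (K:=R_AbsRing) (V:=R_NormedModule)). now exists df.
Qed.

Lemma mvt_nonneg f df a b : (forall x, is_derive f x (df x)) ->
  (forall x, a <= x <= b -> 0 <= df x) -> a <= b -> f a <= f b.
Proof.
intros Hd Hp hab.
destruct (MVT_gen f a b df) as [c [hc e]].
- intros; apply Hd.
- intros; eapply deriv_contpt, Hd.
- rewrite Rmin_left, Rmax_right in hc by lra.
  assert (0 <= df c) by (apply Hp; lra). nra.
Qed.

Section G.
Variables (N : nat) (gamma xi eta D Rr : R).
Hypotheses (hN : (1 <= N)%nat) (hg : 0 < gamma) (hx : 0 < xi) (he : 0 < eta) (hD : 0 < D) (hR : 0 < Rr).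
Notation Cb := (Cbar gamma xi eta D Rr).
Notation g := (gcoef N gamma xi eta D Rr).

Lemma INR_N_pos : 1 <= INR N.
Proof. apply (le_INR 1). exact hN. Qed.

Lemma g_mono s t : s <= t -> g s <= g t.
Proof.
apply (mvt_nonneg g (fun x => INR N * Cb x)).
- intro; apply g_derive; auto.
- intros. pose proof INR_N_pos. pose proof (Cbar_ge0 gamma xi eta D Rr hg hx hD hR x). nra.
Qed.

Lemma g_ge0 t : 0 <= t -> 0 <= g t.
Proof. intro. apply Rle_trans with (g 0); [rewrite g0; auto; lra | now apply g_mono]. Qed.

Definition Gmax := INR N * Acst gamma xi D Rr / eta.

Lemma g_le t : 0 <= t -> g t <= Gmax.
Proof.
intro ht. pose proof INR_N_pos. pose proof (Acst_pos gamma xi D Rr hg hx hD hR).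
set (h := fun x => - g x - Gmax * exp (- eta * x)).
assert (h 0 <= h t).
{ apply (mvt_nonneg h (fun x => - (INR N * Cb x) - Gmax * (- eta * exp (- eta * x)))).
  - intro x. unfold h. apply @is_derive_minus. apply @is_derive_opp. apply g_derive; auto.
    apply is_derive_scal. auto_derive; auto. ring.
  - intros x _. pose proof (Cbar_le_exp gamma xi eta D Rr hg hx hD hR x).
    unfold Gmax. field_simplify; [|lra]. 
    assert (INR N * Cb x <= INR N * (Acst gamma xi D Rr * exp (- eta * x))) by (apply Rmult_le_compat_l; lra).
    apply Rdiv_le_0_compat; [|lra]. nra.
  - exact ht. }
unfold h in H1. rewrite g0 in H1 by auto. rewrite Rmult_0_r, exp_0 in H1.
pose proof (exp_pos (-eta*t)). assert (0 < Gmax) by (unfold Gmax; apply Rdiv_lt_0_compat; nra). nra.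
Qed.

Lemma g1_pos : 0 < g 1.
Proof.
assert (0 <= g (1/2)) by (apply g_ge0; lra).
destruct (MVT_gen g (1/2) 1 (fun x => INR N * Cb x)) as [c [hc e]].
- intros; apply g_derive; auto.
- intros; eapply deriv_contpt, g_derive; auto.
- rewrite Rmin_left, Rmax_right in hc by lra.
  pose proof INR_N_pos. pose proof (Cbar_pos gamma xi eta D Rr hg hx hD hR c ltac:(lra)). nra.
Qed.
End G.


Lemma fl_mult (F : (R -> Prop) -> Prop) {FF : Filter F} (f h : R -> R) a b :
  filterlim f F (locally a) -> filterlim h F (locally b) ->
  filterlim (fun t => f t * h t) F (locally (a * b)).
Proof.
intros H1 H2. apply (filterlim_comp_2 f h Rmult H1 H2).
apply (filterlim_mult (K:=R_AbsRing) a b).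
Qed.

Lemma fl_plus (F : (R -> Prop) -> Prop) {FF : Filter F} (f h : R -> R) a b :
  filterlim f F (locally a) -> filterlim h F (locally b) ->
  filterlim (fun t => f t + h t) F (locally (a + b)).
Proof.
intros H1 H2. apply (filterlim_comp_2 f h Rplus H1 H2).
apply (filterlim_plus (K:=R_AbsRing) (V:=R_NormedModule) a b).
Qed.

Lemma fl_const (F : (R -> Prop) -> Prop) {FF : Filter F} (c : R) : filterlim (fun _ : R => c) F (locally c).
Proof. apply filterlim_const. Qed.

Lemma fl_right_of_cont f a : continuity_pt f a -> filterlim f (at_right a) (locally (f a)).
Proof.
intro H. apply continuity_pt_filterlim in H.
eapply filterlim_filter_le_1; [|exact H].
intros P [d Hd]. exists d. intros y hy _. now apply Hd.
Qed.

Lemma mono_right f df a b : a <= b -> (forall x, a < x -> is_derive f x (df x)) ->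
  (forall x, a < x -> df x <= 0) -> filterlim f (at_right a) (locally (f a)) -> f b <= f a.
Proof.
intros hab Hd Hn Hc.
destruct (Rle_lt_or_eq_dec _ _ hab) as [hlt|heq]; [|subst; lra].
assert (Hs : forall s, a < s < b -> f b <= f s).
{ intros s hs. destruct (MVT_gen f s b df) as [c [hc e]].
  - intros x hx. rewrite Rmin_left, Rmax_right in hx by lra. apply Hd; lra.
  - intros x hx. rewrite Rmin_left, Rmax_right in hx by lra.
    apply continuity_pt_filterlim.
    apply (ex_derive_continuous (K:=R_AbsRing) (V:=R_NormedModule)). exists (df x). apply Hd; lra.
  - rewrite Rmin_left, Rmax_right in hc by lra. assert (df c <= 0) by (apply Hn; lra). nra. }
apply Rnot_lt_le. intro hlt2.
assert (he : 0 < f b - f a) by lra.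
destruct (Hc (fun y => ball (f a) (mkposreal _ he) y)) as [d Hd2].
{ now exists (mkposreal _ he). }
set (s := a + Rmin d (b - a) / 2).
assert (hd : 0 < d) by apply cond_pos.
assert (Rmin d (b-a) > 0) by (apply Rmin_pos; lra).
assert (Rmin d (b-a) <= d) by apply Rmin_l.
assert (Rmin d (b-a) <= b - a) by apply Rmin_r.
assert (hs : a < s < b) by (unfold s; lra).
specialize (Hd2 s). 
assert (hb : ball a d s).
{ change (Rabs (s - a) < d). rewrite Rabs_right; unfold s; lra. }
specialize (Hd2 hb ltac:(lra)). change (Rabs (f s - f a) < f b - f a) in Hd2.
apply Rabs_def2 in Hd2. destruct Hd2. specialize (Hs s hs). lra.
Qed.

#[global] Instance at_right_Filter (x : R) : Filter (at_right x).
Proof. apply at_right_proper_filter. Qed.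


Section Main.
Variables (N : nat) (beta gamma xi eta D Rr : R).
Hypotheses (hN : (1 <= N)%nat) (hb : 0 < beta) (hg : 0 < gamma) (hx : 0 < xi) (he : 0 < eta) (hD : 0 < D) (hR : 0 < Rr).
Notation Cb := (Cbar gamma xi eta D Rr).
Notation g := (gcoef N gamma xi eta D Rr).

Variables (t0 : R) (V X : R -> R).
Hypotheses (ht0 : 0 <= t0) (hsol : is_solution beta g t0 V X).

Definition W t := V t ^ 2 + (g t + beta^2/4) * X t ^ 2 + beta/2 * X t * V t.
Definition Wd t := - (3 * beta / 2) * V t ^ 2 + (INR N * Cb t - beta / 2 * g t) * X t ^ 2.

Lemma V_rc s : t0 <= s -> filterlim V (at_right s) (locally (V s)).
Proof.
intro hs. destruct hsol as [h1 [h2 h3]]. destruct (Rle_lt_or_eq_dec _ _ hs) as [hl|he2].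
- apply fl_right_of_cont. eapply deriv_contpt. apply (proj1 (h3 s hl)).
- subst; exact h1.
Qed.

Lemma X_rc s : t0 <= s -> filterlim X (at_right s) (locally (X s)).
Proof.
intro hs. destruct hsol as [h1 [h2 h3]]. destruct (Rle_lt_or_eq_dec _ _ hs) as [hl|he2].
- apply fl_right_of_cont. eapply deriv_contpt. apply (proj2 (h3 s hl)).
- subst; exact h2.
Qed.

Lemma W_rc s : t0 <= s -> filterlim W (at_right s) (locally (W s)).
Proof.
intro hs. pose proof (V_rc s hs) as hV. pose proof (X_rc s hs) as hX.
assert (hG : filterlim g (at_right s) (locally (g s))).
{ apply fl_right_of_cont. eapply deriv_contpt. apply g_derive; auto. }
unfold W. apply (fl_plus (at_right s)); [apply (fl_plus (at_right s))|].
- simpl. apply (fl_mult (at_right s)); auto. replace (V s) with (V s * 1) at 2 by ring. apply (fl_mult (at_right s)); auto. apply (fl_const (at_right s)).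
- apply (fl_mult (at_right s)). apply (fl_plus (at_right s)); auto. apply (fl_const (at_right s)). simpl.
  apply (fl_mult (at_right s)); auto. replace (X s) with (X s * 1) at 2 by ring. apply (fl_mult (at_right s)); auto. apply (fl_const (at_right s)).
- apply (fl_mult (at_right s)); auto. apply (fl_mult (at_right s)); auto. apply (fl_const (at_right s)).
Qed.

Lemma decay_from s r : t0 <= s -> (forall x, s < x -> Wd x <= - r * W x) ->
  forall t, s <= t -> W t <= W s * exp (- r * (t - s)).
Proof.
intros hs Hd t hst.
assert (H : (fun t => W t * exp (r*(t-s))) t <= (fun t => W t * exp (r*(t-s))) s).
{ apply (mono_right (fun t => W t * exp (r*(t-s))) (fun x => (Wd x + r * W x) * exp (r*(x-s))) s t hst).
  - intros x hxs. destruct hsol as [_ [_ h3]]. destruct (h3 x ltac:(lra)) as [dV dX].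
    pose proof (g_derive N gamma xi eta D Rr hg hx he hD hR x) as dg.
    unfold W. auto_derive.
    + repeat split; eexists; eauto.
    + replace (Derive (fun x => V x) x) with (- beta * V x - g x * X x) by (symmetry; now apply is_derive_unique).
      replace (Derive (fun x => X x) x) with (V x) by (symmetry; now apply is_derive_unique).
      replace (Derive (fun x => g x) x) with (INR N * Cb x) by (symmetry; now apply is_derive_unique).
      unfold Wd, W. match goal with |- ?a = ?b => change (@eq R a b) end. replace (x + - s) with (x - s) by (unfold Rminus; reflexivity). field.
  - intros x hxs. pose proof (exp_pos (r*(x-s))). specialize (Hd x hxs). nra.
  - apply (fl_mult (at_right s)). now apply W_rc.
    apply (fl_right_of_cont (fun x => exp (r * (x - s))) s). eapply deriv_contpt. auto_derive; auto. }
simpl in H. rewrite Rminus_diag, Rmult_0_r, exp_0, Rmult_1_r in H.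
replace (W t) with (W t * exp (r * (t - s)) * exp (- r * (t - s))).
2:{ rewrite Rmult_assoc, <- exp_plus. replace (r * (t - s) + - r * (t - s)) with 0 by ring. rewrite exp_0; ring. }
apply Rmult_le_compat_r; [left; apply exp_pos|exact H].
Qed.

Definition mm := Rmin (1/2) (beta^2/8).
Definition MM := 1 + beta/2 + Gmax N gamma xi eta D Rr + beta^2/4.
Definition Lam := INR N * Acst gamma xi D Rr / mm.
Definition cc := Rmin (3*beta/2) (beta * g 1 / 4).
Definition lam := cc / MM.
Definition TT := 1 + Rabs (ln (beta * g 1 / (4 * INR N * Acst gamma xi D Rr))) / eta.
Definition K0 := exp ((Lam + lam) * TT).

Definition Snorm t := V t ^ 2 + X t ^ 2.

Lemma mm_pos : 0 < mm.
Proof. unfold mm. apply Rmin_pos; [lra|]. apply Rdiv_lt_0_compat; [|lra]. now apply pow_lt. Qed.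
Lemma Gmax_pos : 0 <= Gmax N gamma xi eta D Rr.
Proof. eapply Rle_trans; [apply (g_ge0 N gamma xi eta D Rr hN hg hx he hD hR 0); lra|].
apply (g_le N gamma xi eta D Rr hN hg hx he hD hR 0); lra. Qed.
Lemma MM_pos : 0 < MM.
Proof. unfold MM. pose proof Gmax_pos. assert (0 <= beta^2) by (apply pow_le; lra). lra. Qed.
Lemma cc_pos : 0 < cc.
Proof. unfold cc. pose proof (g1_pos N gamma xi eta D Rr hN hg hx he hD hR). apply Rmin_pos; nra. Qed.
Lemma lam_pos : 0 < lam.
Proof. unfold lam. apply Rdiv_lt_0_compat. apply cc_pos. apply MM_pos. Qed.
Lemma Lam_pos : 0 < Lam.
Proof. unfold Lam. pose proof (INR_N_pos N hN). pose proof (Acst_pos gamma xi D Rr hg hx hD hR).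
apply Rdiv_lt_0_compat; [nra|apply mm_pos]. Qed.
Lemma TT_ge1 : 1 <= TT.
Proof. unfold TT. pose proof (Rabs_pos (ln (beta * g 1 / (4 * INR N * Acst gamma xi D Rr)))).
assert (0 <= Rabs (ln (beta * g 1 / (4 * INR N * Acst gamma xi D Rr))) / eta) by (apply Rdiv_le_0_compat; lra). lra. Qed.

Lemma W_lb t : t0 <= t -> mm * Snorm t <= W t.
Proof.
intro ht. pose proof (g_ge0 N gamma xi eta D Rr hN hg hx he hD hR t ltac:(lra)).
assert (h1 : mm <= 1/2) by apply Rmin_l. assert (h2 : mm <= beta^2/8) by apply Rmin_r.
pose proof mm_pos.
unfold W, Snorm.
assert (V t ^ 2 + beta ^ 2 / 4 * X t ^ 2 + beta / 2 * X t * V t >= V t^2/2 + beta^2/8 * X t^2).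
{ assert (0 <= (V t/ sqrt 2 + beta/ (2*sqrt 2) * X t)^2) by apply pow2_ge_0.
  pose proof (sqrt_sqrt 2 ltac:(lra)). assert (0 < sqrt 2) by (apply sqrt_lt_R0; lra).
  replace ((V t/ sqrt 2 + beta/ (2*sqrt 2) * X t)^2) with
    ((V t^2 + beta * X t * V t + beta^2/4 * X t^2) / (sqrt 2 * sqrt 2)) in H1 by (field; lra).
  rewrite H2 in H1. lra. }
assert (0 <= X t ^2) by apply pow2_ge_0. assert (0 <= V t ^2) by apply pow2_ge_0.
nra.
Qed.

Lemma W_ub t : t0 <= t -> W t <= MM * Snorm t.
Proof.
intro ht. pose proof (g_le N gamma xi eta D Rr hN hg hx he hD hR t ltac:(lra)).
pose proof (g_ge0 N gamma xi eta D Rr hN hg hx he hD hR t ltac:(lra)).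
unfold W, Snorm, MM.
assert (0 <= (X t - V t)^2) by apply pow2_ge_0.
assert (0 <= X t ^2) by apply pow2_ge_0. assert (0 <= V t ^2) by apply pow2_ge_0.
assert (beta/2 * X t * V t <= beta/4 * (X t^2 + V t^2)) by nra.
assert (0 <= beta^2) by (apply pow_le; lra).
nra.
Qed.

Lemma Wd_growth x : t0 < x -> Wd x <= - - Lam * W x.
Proof.
intro hxs. pose proof (g_ge0 N gamma xi eta D Rr hN hg hx he hD hR x ltac:(lra)).
pose proof (Cbar_le_exp gamma xi eta D Rr hg hx hD hR x).
assert (exp (- eta * x) <= 1) by (rewrite <- exp_0; apply exp_le'; nra).
pose proof (Acst_pos gamma xi D Rr hg hx hD hR). pose proof (INR_N_pos N hN).
pose proof (Cbar_ge0 gamma xi eta D Rr hg hx hD hR x).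
pose proof (W_lb x ltac:(lra)). pose proof mm_pos.
assert (0 <= X x ^2) by apply pow2_ge_0. assert (0 <= V x ^2) by apply pow2_ge_0.
assert (hc : Cb x <= Acst gamma xi D Rr) by nra.
assert (Wd x <= INR N * Acst gamma xi D Rr * Snorm x).
{ unfold Wd, Snorm. assert (INR N * Cb x * X x ^2 <= INR N * Acst gamma xi D Rr * X x ^2).
  { apply Rmult_le_compat_r; [lra|]. apply Rmult_le_compat_l; lra. }
  assert (0 <= g x * X x ^2) by (apply Rmult_le_pos; lra). assert (0 <= INR N * Acst gamma xi D Rr * V x^2) by (apply Rmult_le_pos; [nra|lra]). nra. }
replace (- - Lam * W x) with (INR N * Acst gamma xi D Rr * (W x / mm)) by (unfold Lam; field; lra).
eapply Rle_trans; [eassumption|]. apply Rmult_le_compat_l; [nra|].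
apply (Rmult_le_reg_l mm); [lra|]. replace (mm * (W x / mm)) with (W x) by (field; lra). lra.
Qed.

Lemma Wd_decay x : TT <= x -> t0 < x -> Wd x <= - lam * W x.
Proof.
intros hT hxs. pose proof TT_ge1.
pose proof (g_mono N gamma xi eta D Rr hN hg hx he hD hR 1 x ltac:(lra)).
pose proof (g1_pos N gamma xi eta D Rr hN hg hx he hD hR).
pose proof (Cbar_le_exp gamma xi eta D Rr hg hx hD hR x).
pose proof (Acst_pos gamma xi D Rr hg hx hD hR). pose proof (INR_N_pos N hN).
set (q := beta * g 1 / (4 * INR N * Acst gamma xi D Rr)).
assert (hq : 0 < q) by (unfold q; apply Rdiv_lt_0_compat; nra).
assert (exp (- eta * x) <= q).
{ rewrite <- (exp_ln q hq). apply exp_le'.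
  assert (- eta * x <= - eta * TT) by nra.
  unfold TT in H5. fold q in H5.
  replace (- eta * (1 + Rabs (ln q) / eta)) with (- eta - Rabs (ln q)) in H5 by (field; lra).
  pose proof (Rle_abs (- ln q)). rewrite Rabs_Ropp in H6. lra. }
assert (hC : INR N * Cb x <= beta * g 1 / 4).
{ replace (beta * g 1 / 4) with (INR N * Acst gamma xi D Rr * q) by (unfold q; field; lra).
  assert (Cb x <= Acst gamma xi D Rr * q) by nra. nra. }
pose proof (W_ub x ltac:(lra)). pose proof MM_pos. pose proof cc_pos.
assert (h1 : cc <= 3*beta/2) by apply Rmin_l. assert (h2 : cc <= beta * g 1 / 4) by apply Rmin_r.
assert (0 <= X x ^2) by apply pow2_ge_0. assert (0 <= V x ^2) by apply pow2_ge_0.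
assert (Wd x <= - cc * Snorm x).
{ unfold Wd, Snorm. assert ((INR N * Cb x - beta / 2 * gcoef N gamma xi eta D Rr x) <= - (beta * g 1 / 4)) by nra.
  nra. }
unfold lam. replace (- (cc / MM) * W x) with (- cc * (W x / MM)) by (field; lra).
eapply Rle_trans; [eassumption|].
assert (W x / MM <= Snorm x).
{ apply (Rmult_le_reg_l MM); [lra|]. replace (MM * (W x / MM)) with (W x) by (field; lra). lra. }
nra.
Qed.

Lemma W_bound t : t0 <= t -> W t <= W t0 * K0 * exp (- lam * (t - t0)).
Proof.
intro ht. pose proof lam_pos. pose proof Lam_pos. pose proof TT_ge1.
assert (hW0 : 0 <= W t0) by (pose proof (W_lb t0 ltac:(lra)); pose proof mm_pos;
  assert (0 <= Snorm t0) by (unfold Snorm; pose proof (pow2_ge_0 (V t0)); pose proof (pow2_ge_0 (X t0)); lra); nra).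
assert (G : forall s t, t0 <= s -> s <= t -> W t <= W s * exp (- - Lam * (t - s))).
{ intros s' t' hs' hst'. apply (decay_from s' (-Lam) hs').
  intros; apply Wd_growth; lra. lra. }
assert (Dc : forall s t, t0 <= s -> TT <= s -> s <= t -> W t <= W s * exp (- lam * (t - s))).
{ intros s' t' hs' hT' hst'. apply (decay_from s' lam hs').
  intros; apply Wd_decay; lra. lra. }
unfold K0. rewrite Rmult_assoc, <- exp_plus.
destruct (Rle_dec t TT) as [h1|h1].
- eapply Rle_trans; [apply (G t0 t); lra|]. apply Rmult_le_compat_l; [lra|]. apply exp_le'. nra.
- destruct (Rle_dec TT t0) as [h2|h2].
  + eapply Rle_trans; [apply (Dc t0 t); lra|]. apply Rmult_le_compat_l; [lra|]. apply exp_le'. nra.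
  + eapply Rle_trans; [apply (Dc TT t); lra|].
    eapply Rle_trans. apply Rmult_le_compat_r; [left; apply exp_pos|]. apply (G t0 TT); lra.
    rewrite Rmult_assoc, <- exp_plus. apply Rmult_le_compat_l; [lra|]. apply exp_le'. nra.
Qed.
End Main.


Theorem theorem5p2 (N : nat) (beta gamma xi eta D Rr : R) :
  (1 <= N)%nat -> 0 < beta -> 0 < gamma -> 0 < xi -> 0 < eta -> 0 < D -> 0 < Rr ->
  GUES_exp beta (gcoef N gamma xi eta D Rr).
Proof.
intros hN hb hg hx he hD hR.
pose proof (lam_pos N beta gamma xi eta D Rr hN hb hg hx he hD hR) as hl.
pose proof (MM_pos N beta gamma xi eta D Rr hN hb hg hx he hD hR) as hM.
pose proof (mm_pos beta hb) as hm.
set (lm := lam N beta gamma xi eta D Rr) in *.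
set (Mc := MM N beta gamma xi eta D Rr) in *.
set (k0 := K0 N beta gamma xi eta D Rr).
assert (hk : 0 < k0) by apply exp_pos.
assert (hQ : 0 < Mc * k0 / mm beta) by (apply Rdiv_lt_0_compat; [nra|lra]).
exists (sqrt (Mc * k0 / mm beta)), (lm / 2).
split; [now apply sqrt_lt_R0|]. split; [lra|].
intros t0 V X ht0 hsol t ht.
pose proof (W_bound N beta gamma xi eta D Rr hN hb hg hx he hD hR t0 V X ht0 hsol t ht) as Wb.
pose proof (W_lb N beta gamma xi eta D Rr hN hb hg hx he hD hR t0 V X ht0 t ht) as Wl.
pose proof (W_ub N beta gamma xi eta D Rr hN hb hg hx he hD hR t0 V X ht0 t0 ltac:(lra)) as Wu.
fold lm k0 Mc in Wb, Wu.
set (E := exp (- (lm/2) * (t - t0))).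
assert (hE : exp (- lm * (t - t0)) = E * E).
{ unfold E. rewrite <- exp_plus. f_equal. field. }
assert (hE0 : 0 < E) by apply exp_pos.
assert (hS0 : 0 <= Snorm V X t0) by (unfold Snorm; pose proof (pow2_ge_0 (V t0)); pose proof (pow2_ge_0 (X t0)); lra).
assert (hS : Snorm V X t <= (Mc * k0 / mm beta) * (E * E) * Snorm V X t0).
{ rewrite hE in Wb. apply (Rmult_le_reg_l (mm beta)); [lra|].
  replace (mm beta * (Mc * k0 / mm beta * (E * E) * Snorm V X t0)) with ((Mc * Snorm V X t0) * k0 * (E * E)) by (field; lra).
  eapply Rle_trans; [exact Wl|]. eapply Rle_trans; [exact Wb|].
  apply Rmult_le_compat_r; [nra|]. apply Rmult_le_compat_r; lra. }
unfold state_norm. fold (Snorm V X t) (Snorm V X t0).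
eapply Rle_trans; [apply sqrt_le_1_alt; exact hS|].
rewrite !sqrt_mult_alt by nra. rewrite sqrt_sqrt by lra. lra.
Qed.
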